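(* Let $q=p^k$ be an odd prime power and let $\alpha\in\mathbb{F}_{q^2}^*$ have multiplicative order $q+1$. Let $Q,R,S\in\{p^i:i\ge0\}$ and $N=Q+R+S$. Then $$x^{N}+\alpha^{R+S}x^{Q+q(R+S)}+\alpha^{Q+S}x^{R+q(Q+S)}+\alpha^{Q+R}x^{S+q(Q+R)}$$ is a permutation polynomial of $\mathbb{F}_{q^2}$ if and only if $\gcd(N,q-1)=1$.
   Context: A polynomial is a permutation polynomial of $\mathbb{F}_{q^2}$ if the map it induces on $\mathbb{F}_{q^2}$ is bijective. *)

(* Defs.v *)
From mathcomp Require Import all_boot all_order all_algebra all_field.
Set Implicit Arguments. Unset Strict Implicit. Unset Printing Implicit Defensive.
Import GRing.Theory.
Local Open Scope ring_scope.

Definition perm_poly (F : finFieldType) (P : {poly F}) : Prop :=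
  bijective (fun x : F => P.[x]).

Definition thm_poly (F : finFieldType) (q Q R S : nat) (alpha : F) : {poly F} :=
  'X^(Q + R + S)
  + alpha ^+ (R + S) *: 'X^(Q + q * (R + S))
  + alpha ^+ (Q + S) *: 'X^(R + q * (Q + S))
  + alpha ^+ (Q + R) *: 'X^(S + q * (Q + R)).

(* Main.v *)
Require Import Defs.
From mathcomp Require Import all_boot all_order all_algebra all_field all_solvable.
From mathcomp Require Import ring zify.
Import GRing.Theory.
Local Open Scope ring_scope.
Set Implicit Arguments. Unset Strict Implicit.

Lemma frobD (F : finFieldType) p i (x y : F) : p \in [pchar F] ->
  (x + y) ^+ (p ^ i) = x ^+ (p ^ i) + y ^+ (p ^ i).
Proof.
move=> pc; apply: exprDn_pchar.
by rewrite (eq_pnat _ (pcharf_eq pc)) pnatX pnat_id ?(pcharf_prime pc).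
Qed.

Lemma frobB (F : finFieldType) p i (x y : F) : p \in [pchar F] ->
  (x - y) ^+ (p ^ i) = x ^+ (p ^ i) - y ^+ (p ^ i).
Proof.
move=> pc; rewrite frobD // exprNn_pchar //.
by rewrite (eq_pnat _ (pcharf_eq pc)) pnatX pnat_id ?(pcharf_prime pc).
Qed.

Lemma poly_eval (F : finFieldType) q Q R S (al x : F) :
  (thm_poly q Q R S al).[x] =
  let y := al * x ^+ q in
  x^+Q*x^+R*x^+S + x^+Q*y^+R*y^+S + y^+Q*x^+R*y^+S + y^+Q*y^+R*x^+S.
Proof.
rewrite /thm_poly !hornerE /= !exprD !exprM !exprD !exprMn; ring.
Qed.

Lemma two_f (F : finFieldType) p q a b e (al x : F) : p \in [pchar F] ->
  let y := al * x ^+ q in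
  2 * (thm_poly q (p ^ a)%N (p ^ b)%N (p ^ e)%N al).[x] =
  (x + y) ^+ (p ^ a + p ^ b + p ^ e)%N + (x - y) ^+ (p ^ a + p ^ b + p ^ e)%N.
Proof.
move=> pc y; rewrite poly_eval -/y !exprD !frobB // !frobD // /=; ring.
Qed.

Lemma fval (F : finFieldType) p k a b e (al g d s t : F) : p \in [pchar F] ->
  al * g ^+ (p ^ k)%N = g -> al * d ^+ (p ^ k)%N = - d ->
  s ^+ (p ^ k)%N = s -> t ^+ (p ^ k)%N = t ->
  2 * (thm_poly (p ^ k)%N (p ^ a)%N (p ^ b)%N (p ^ e)%N al).[g * s + d * t] =
  2 ^+ (p ^ a + p ^ b + p ^ e)%N * (g ^+ (p ^ a + p ^ b + p ^ e)%N * s ^+ (p ^ a + p ^ b + p ^ e)%N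
     + d ^+ (p ^ a + p ^ b + p ^ e)%N * t ^+ (p ^ a + p ^ b + p ^ e)%N).
Proof.
move=> pc Hg Hd Hs Ht; rewrite two_f //.
have -> : al * (g * s + d * t) ^+ (p ^ k)%N = g * s - d * t.
  by rewrite frobD // !exprMn Hs Ht mulrDr !mulrA Hg Hd; ring.
have -> : g * s + d * t + (g * s - d * t) = 2 * (g * s) by ring.
have -> : g * s + d * t - (g * s - d * t) = 2 * (d * t) by ring.
by rewrite !exprMn mulrDr.
Qed.

Lemma two_neq0 (F : finFieldType) p : p \in [pchar F] -> odd p -> (2 : F) != 0.
Proof.
move=> pc po; rewrite -(dvdn_pcharf pc) dvdn_prime2 ?(pcharf_prime pc) //.
by apply/eqP=> p2; move: po; rewrite p2.
Qed.

Lemma indep (F : finFieldType) p k (be g d a b : F) : p \in [pchar F] -> odd p ->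
  g != 0 -> d != 0 -> be * g ^+ (p ^ k)%N = g -> be * d ^+ (p ^ k)%N = - d ->
  a ^+ (p ^ k)%N = a -> b ^+ (p ^ k)%N = b -> g * a + d * b = 0 -> a = 0 /\ b = 0.
Proof.
move=> pc po g0 d0 Hg Hd Ha Hb H.
have H1 : g ^+ (p ^ k)%N * a + d ^+ (p ^ k)%N * b = 0.
  have := congr1 (fun z => z ^+ (p ^ k)%N) H; rewrite /= frobD // !exprMn Ha Hb => ->.
  have pk0 : (p ^ k)%N != 0%N by rewrite -lt0n expn_gt0 prime_gt0 ?(pcharf_prime pc).
  by rewrite expr0n (negbTE pk0).
have H2 : g * a - d * b = 0.
  transitivity (be * (g ^+ (p ^ k)%N * a + d ^+ (p ^ k)%N * b)); last by rewrite H1 mulr0.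
  by rewrite mulrDr !mulrA Hg Hd; ring.
have H3 : 2 * (g * a) = 0.
  transitivity ((g * a + d * b) + (g * a - d * b)); first by ring.
  by rewrite H H2 addr0.
move/eqP: H3; rewrite !mulf_eq0 (negbTE (two_neq0 pc po)) (negbTE g0) /= => /eqP a0.
split=> //; move: H; rewrite a0 mulr0 add0r => /eqP; rewrite mulf_eq0 (negbTE d0).
by move/eqP.
Qed.

Lemma pow_inj (F : finFieldType) (q N : nat) (s t : F) : (0 < N)%N -> (1 < q)%N ->
  gcdn N (q - 1) = 1%N -> s ^+ q = s -> t ^+ q = t -> s ^+ N = t ^+ N -> s = t.
Proof.
move=> N0 q1 g Hs Ht E.
have [t0|t0] := eqVneq t 0.
  move: E; rewrite t0 expr0n gtn_eqF //= => /eqP; rewrite expf_eq0 N0 /=.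
  by move/eqP.
pose r := s / t.
have rN : r ^+ N = 1 by rewrite /r exprMn exprVn E divff // expf_neq0.
have r0 : r != 0.
  apply/eqP=> r0; move: rN; rewrite r0 expr0n gtn_eqF //= => /esym/eqP.
  by rewrite oner_eq0.
have rq : r ^+ (q - 1) = 1.
  apply: (mulIf r0); rewrite -exprSr subn1 prednK ?(ltnW q1) // mul1r.
  by rewrite /r exprMn exprVn Hs Ht.
have [a _] := Bezoutl (q - 1) N0; rewrite g => /dvdnP[c Hc].
have r1 : r = 1.
  have : r ^+ (1 + a * (q - 1)) = r by rewrite exprD expr1 mulnC exprM rq expr1n mulr1.
  by rewrite Hc mulnC exprM rN expr1n => <-.
have -> : s = r * t by rewrite /r divfK.
by rewrite r1 mul1r.
Qed.

Lemma prim_exists (F : finFieldType) : exists z : F, (#|F|.-1).-primitive_root z.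
Proof.
have n0 : (0 < #|F|.-1)%N by rewrite -subn1 subn_gt0 finNzRing_gt1.
have F0 : (0 < #|F|)%N by apply: ltnW (finNzRing_gt1 F).
have : has (#|F|.-1).-primitive_root (enum (predC1 (0 : F))).
  apply: has_prim_root => //; last by rewrite -cardE cardC1.
  - apply/allP=> x; rewrite mem_enum /= => x0; rewrite unity_rootE; apply/eqP.
    by apply: (mulIf x0); rewrite mul1r -exprSr prednK // expf_card.
  - exact: enum_uniq.
by case/hasP=> z _ pz; exists z.
Qed.

Lemma qroot (F : finFieldType) (q : nat) (z c : F) : (1 < q)%N ->
  (q * q - 1).-primitive_root z -> c ^+ q.+1 = 1 -> exists g, g != 0 /\ g ^+ (q - 1) = c.
Proof.
move=> q1 pz Hc.
have n0 : (0 < q * q - 1)%N by nia.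
have en : (q * q - 1 = (q - 1) * q.+1)%N by nia.
have z0 : z != 0.
  apply/eqP=> z0; have := prim_expr_order pz; rewrite z0 expr0n gtn_eqF //=.
  by move/esym/eqP; rewrite oner_eq0.
have cn : c ^+ (q * q - 1) = 1 by rewrite en mulnC exprM Hc expr1n.
have [i ci] := prim_rootP pz cn.
move: ci; move: (i : nat) => {}i ci.
move: Hc; rewrite ci -exprM => /eqP; rewrite -(prim_order_dvd pz) en dvdn_pmul2r //.
case/dvdnP=> m Hm; exists (z ^+ m); split; first exact: expf_neq0.
by rewrite -exprM -Hm.
Qed.

Unset Implicit Arguments.

Theorem mainTheorem11 (F : finFieldType) (p k : nat) (alpha : F) (Q R S : nat) :
  prime p -> odd p -> (0 < k)%N ->
  #|F| = ((p ^ k) ^ 2)%N ->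
  (p ^ k).+1.-primitive_root alpha ->
  (exists i, Q = (p ^ i)%N) -> (exists i, R = (p ^ i)%N) -> (exists i, S = (p ^ i)%N) ->
  (perm_poly (thm_poly (p ^ k) Q R S alpha) <->
   gcdn (Q + R + S) ((p ^ k) - 1) = 1%N).
Proof.
move=> pp po k0 cardF pa [a ->] [b ->] [e ->].
have pc : p \in [pchar F] by apply: (@card_finPcharP F p (k * 2)%N) => //; rewrite expnM.
have q1 : (1 < p ^ k)%N by rewrite -{1}(expn0 p) ltn_exp2l ?prime_gt1.
have q0 : (0 < p ^ k)%N by apply: ltnW.
have qodd : odd (p ^ k) by rewrite oddX po orbT.
have cardn : #|F|.-1 = (p ^ k * p ^ k - 1)%N by rewrite -subn1 cardF mulnn.
have [z pz] := prim_exists F; rewrite cardn in pz.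
have al1 := prim_expr_order pa.
have al0 : alpha != 0.
  apply/eqP=> a0; move: al1; rewrite a0 expr0n /= => /esym/eqP; by rewrite oner_eq0.
have hq : forall x : F, x ^+ (p ^ k) ^+ (p ^ k) = x.
  by move=> x; rewrite -exprM mulnn -cardF expf_card.
have [g [g0 gq1]] : exists g : F, g != 0 /\ g ^+ (p ^ k - 1) = alpha^-1.
  by apply: (qroot q1 pz); rewrite exprVn al1 invr1.
have [d [d0 dq1]] : exists d : F, d != 0 /\ d ^+ (p ^ k - 1) = - alpha^-1.
  apply: (qroot q1 pz); rewrite exprNn exprVn al1 invr1 mulr1 -signr_odd /=.
  by rewrite qodd.
have eq1 : forall x : F, x ^+ (p ^ k) = x ^+ (p ^ k - 1) * x.
  by move=> x; rewrite -exprSr subn1 prednK.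
have Hg : alpha * g ^+ (p ^ k) = g by rewrite eq1 gq1 mulrA mulfV // mul1r.
have Hd : alpha * d ^+ (p ^ k) = - d by rewrite eq1 dq1 mulrA mulrN mulfV // mulN1r.
set N := (p ^ a + p ^ b + p ^ e)%N.
have Nodd : odd N by rewrite /N !oddD !oddX po !orbT.
have N0 : (0 < N)%N by rewrite /N addn_gt0 expn_gt0 (prime_gt0 pp) !orbT.
have two0 := two_neq0 pc po.
split.
- move=> /bij_inj /= finj.
  apply/eqP; apply/negPn/negP => dn1.
  set dd := gcdn N (p ^ k - 1) in dn1.
  have dd0 : (0 < dd)%N by rewrite /dd gcdn_gt0 N0.
  have dd1 : (1 < dd)%N by rewrite ltn_neqAle eq_sym dn1.
  set n := (p ^ k * p ^ k - 1)%N in pz.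
  have en : n = ((p ^ k - 1) * (p ^ k).+1)%N by rewrite /n; nia.
  have n0 : (0 < n)%N by rewrite /n; nia.
  have ddq : (dd %| p ^ k - 1)%N by apply: dvdn_gcdr.
  have ddN : (dd %| N)%N by apply: dvdn_gcdl.
  have ddn : (dd %| n)%N by rewrite en dvdn_mulr.
  pose zeta := z ^+ (n %/ dd).
  have zq1 : zeta ^+ (p ^ k - 1) = 1.
    apply/eqP; rewrite /zeta -exprM -(prim_order_dvd pz).
    by rewrite (divn_mulAC _ ddn) -(muln_divA _ ddq) dvdn_mulr.
  have zN : zeta ^+ N = 1.
    apply/eqP; rewrite /zeta -exprM -(prim_order_dvd pz).
    by rewrite (divn_mulAC _ ddn) -(muln_divA _ ddN) dvdn_mulr.
  have zn1 : zeta != 1.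
    rewrite /zeta -(prim_order_dvd pz); apply/negP => /dvdn_leq.
    have lt := ltn_Pdiv dd1 n0.
    have gt : (0 < n %/ dd)%N by rewrite divn_gt0 // dvdn_leq.
    by move=> /(_ gt); rewrite leqNgt lt.
  have zq : zeta ^+ (p ^ k) = zeta by rewrite eq1 zq1 mul1r.
  have E : g * zeta + d * 0 = g * 1 + d * 0.
    apply: finj; apply: (mulfI two0).
    rewrite !(fval _ _ _ _ Hg Hd) ?expr1n ?expr0n ?(gtn_eqF q0) //.
    by rewrite -/N zN.
  by move: zn1 E; rewrite !mulr0 !addr0 => zn1 /(mulfI g0) zE; rewrite zE eqxx in zn1.
- move=> gN; apply: injF_bij => x1 x2 /= E.
  have aq : alpha ^+ (p ^ k) = alpha^-1.
    by apply: (mulIf al0); rewrite -exprSr al1 mulVf.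
  have gq : g ^+ (p ^ k) = alpha^-1 * g by rewrite eq1 gq1.
  have dq : d ^+ (p ^ k) = - (alpha^-1 * d) by rewrite eq1 dq1 mulNr.
  have twoq : (2 : F) ^+ (p ^ k) = 2.
    by have := @frobD F p k 1 1 pc; rewrite expr1n.
  have dec : forall x : F, exists s t, s ^+ (p ^ k) = s /\ t ^+ (p ^ k) = t /\ x = g * s + d * t.
    move=> x; exists ((x + alpha * x ^+ (p ^ k)) / (2 * g)), ((x - alpha * x ^+ (p ^ k)) / (2 * d)).
    split; [|split].
    - rewrite !exprMn exprVn !exprMn frobD // !exprMn hq aq gq twoq. field.
      by rewrite g0 two0 al0.
    - rewrite !exprMn exprVn !exprMn frobB // !exprMn hq aq dq twoq. field.
      by rewrite d0 two0 al0 oppr_eq0 d0.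
    - by move: (x ^+ (p ^ k)) => y; field; rewrite d0 two0 g0.
  have [s1 [t1 [hs1 [ht1 ex1]]]] := dec x1.
  have [s2 [t2 [hs2 [ht2 ex2]]]] := dec x2.
  move/(congr1 (fun w => 2 * w)): E; rewrite /= ex1 ex2 !(fval a b e pc Hg Hd) // -/N.
  move=> /(mulfI (expf_neq0 _ two0)) E.
  have H0 : g ^+ N * (s1 ^+ N - s2 ^+ N) + d ^+ N * (t1 ^+ N - t2 ^+ N) = 0.
    transitivity ((g ^+ N * s1 ^+ N + d ^+ N * t1 ^+ N) - (g ^+ N * s2 ^+ N + d ^+ N * t2 ^+ N)).
      by ring.
    by rewrite E subrr.
  have Hgn : alpha ^+ N * (g ^+ N) ^+ (p ^ k) = g ^+ N by rewrite exprAC -exprMn Hg.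
  have Hdn : alpha ^+ N * (d ^+ N) ^+ (p ^ k) = - d ^+ N.
    by rewrite exprAC -exprMn Hd exprNn -signr_odd Nodd ?expr1 mulN1r.
  have Hsq : (s1 ^+ N - s2 ^+ N) ^+ (p ^ k) = s1 ^+ N - s2 ^+ N.
    by rewrite frobB // exprAC hs1 exprAC hs2.
  have Htq : (t1 ^+ N - t2 ^+ N) ^+ (p ^ k) = t1 ^+ N - t2 ^+ N.
    by rewrite frobB // exprAC ht1 exprAC ht2.
  have [/subr0_eq es /subr0_eq et] :=
    indep pc po (expf_neq0 _ g0) (expf_neq0 _ d0) Hgn Hdn Hsq Htq H0.
  by rewrite (pow_inj N0 q1 gN hs1 hs2 es) (pow_inj N0 q1 gN ht1 ht2 et).
Qed.
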